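(* Consider the nonautonomous TASEP with $n$ sites and rate functions $\lambda_0,\dots,\lambda_n$, with associated NRDS $\phi$ on state space $X=\{0,1\}^n$. Suppose that on an interval $I=[t_0,t)$ the $n+1$ Poisson processes have joint $(r,R,m)$-bounded rates with $m=n(n+1)/2$ and $R>r>0$. Then there exists $\delta=\delta(r,R,n)>0$ such that $\mathbb{P}(\Gamma(t,t_0))\ge\delta$, where $\Gamma(t,t_0):=\{\omega\mid\phi(t,t_0,x_1,\omega)=\phi(t,t_0,x_2,\omega)\text{ for all }x_1,x_2\in X\}$.
   Context: Nonautonomous TASEP: $n$ sites; locally integrable rate functions $\lambda_k:\mathbb{R}\to[0,\infty)$, $k=0,\dots,n$, each with $\int_0^t\lambda_k\to\pm\infty$ as $t\to\pm\infty$; to each $k$ an independent non-homogeneous Poisson process on $\mathbb{R}$ with rate $\lambda_k$ (the image of its points under $M_k(t)=\int_0^t\lambda_k$ is a homogeneous rate-1 Poisson process on $\mathbb{R}$). Almost surely all points of all processes are distinct without accumulation; ordering them gives jump times $t_i(\omega)$ increasing in $i\in\mathbb{Z}$ and sites $k_i(\omega)\in\{0,\dots,n\}$. State $x=(s_1,\dots,s_n)\in X=\{0,1\}^n$ ($s_j=1$ iff site $j$ occupied). Single-jump map: $f(x,0)=(1,s_2,\dots,s_n)$; $f(x,n)=(s_1,\dots,s_{n-1},0)$; for $0<k<n$ with $s_k=1,s_{k+1}=0$, $f(x,k)$ sets $s_k=0,s_{k+1}=1$; otherwise $f(x,k)=x$. The NRDS: $\phi(t,t_0,x,\omega)$ is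 obtained from $x$ by applying successively $f(\cdot,k_i(\omega))$ for all $i$ with $t_i(\omega)\in[t_0,t)$ in increasing order of $i$ (and equals $x$ if there is no such $i$). Joint $(r,R,m)$-bounded rates on $[\tau_1,\tau_2)$: there exist $\tau_1=q_0<\dots<q_m=\tau_2$ with $r\le\int_{q_i}^{q_{i+1}}\lambda_k\le R$ for all $i=0,\dots,m-1$, $k=0,\dots,n$. *)

(* Defs.v *)
From HB Require Import structures.
From mathcomp Require Import all_boot all_order all_algebra.
From mathcomp Require Import all_classical all_reals all_analysis.
Set Implicit Arguments. Unset Strict Implicit. Unset Printing Implicit Defensive.
Import Order.TTheory GRing.Theory Num.Theory.
Import numFieldNormedType.Exports.
Local Open Scope classical_set_scope.
Local Open Scope ring_scope.

Section TASEP.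
Variable R : realType.

Definition rate_int (lam : R -> R) (a b : R) : R :=
  fine (\int[@lebesgue_measure R]_(x in `[a, b[) (lam x)%:E)%E.

Definition cum_rate (lam : R -> R) (t : R) : R :=
  if 0 <= t then rate_int lam 0 t else - rate_int lam t 0.

Definition admissible_rate (lam : R -> R) : Prop :=
  [/\ forall x, 0 <= lam x,
      forall a b : R, (@lebesgue_measure R).-integrable `[a, b] (EFin \o lam),
      cum_rate lam t @[t --> +oo] --> +oo &
      cum_rate lam t @[t --> -oo] --> -oo].

Definition poisson_mass (mu : R) (j : nat) : R :=
  expR (- mu) * mu ^+ j / (j`!)%:R.

Definition card_is (A : set R) (j : nat) : Prop :=
  exists s : seq R, [/\ uniq s, size s = j & forall x, A x <-> x \in s].

(** Independent non-homogeneous Poisson processes with rates lam k: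
    for every finite family of (process index, half-open interval [a,b))
    such that intervals belonging to the same process are pairwise
    disjoint, and every family of counts, the joint event is measurable
    and its probability is the product of Poisson masses with means
    \int_a^b lam_k. (This fixes all finite-dimensional distributions,
    including mutual independence of the processes.) *)
Definition indep_poisson_processes (n : nat) (lam : 'I_n.+1 -> R -> R)
    (d : measure_display) (Omega : measurableType d)
    (P : probability Omega R) (pts : 'I_n.+1 -> Omega -> set R) : Prop :=
  forall (F : seq ('I_n.+1 * R * R)) (cnt : seq nat),
    size cnt = size F ->
    (forall i, (i < size F)%N -> (nth (ord0, 0, 0) F i).1.2 <= (nth (ord0, 0, 0) F i).2) ->
    (forall i j, (i < size F)%N -> (j < size F)%N -> i <> j ->
       (nth (ord0, 0, 0) F i).1.1 = (nth (ord0, 0, 0) F j).1.1 ->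
       `[(nth (ord0, 0, 0) F i).1.2, (nth (ord0, 0, 0) F i).2[ `&`
       `[(nth (ord0, 0, 0) F j).1.2, (nth (ord0, 0, 0) F j).2[ = set0) ->
    let E := [set w | forall i, (i < size F)%N ->
                 let: (k, a, b) := nth (ord0, 0, 0) F i in
                 card_is (pts k w `&` `[a, b[) (nth 0%N cnt i)] in
    measurable E /\
    P E = (\prod_(i < size F)
             (let: (k, a, b) := nth (ord0, 0, 0) F i in
              poisson_mass (rate_int (lam k) a b) (nth 0%N cnt i)))%:E.

Definition joint_bounded (n : nat) (lam : 'I_n.+1 -> R -> R) (r Rb : R)
    (m : nat) (tau1 tau2 : R) : Prop :=
  exists q : nat -> R,
    [/\ q 0%N = tau1, q m = tau2,
        forall i, (i < m)%N -> q i < q i.+1 &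
        forall i (k : 'I_n.+1), (i < m)%N ->
          r <= rate_int (lam k) (q i) (q i.+1) <= Rb].

(** States: x = (s_1,...,s_n), site j (1 <= j <= n) stored at index j-1. *)
Definition state (n : nat) := {ffun 'I_n -> bool}.

Definition occ (n : nat) (x : state n) (j : nat) : bool :=
  [exists i : 'I_n, (i.+1 == j) && x i].

Definition jump (n : nat) (x : state n) (k : 'I_n.+1) : state n :=
  [ffun i : 'I_n =>
     let j := i.+1 in
     if (k == 0 :> nat) then (if j == 1%N then true else x i)
     else if (k == n :> nat) then (if j == n then false else x i)
     else if occ x k && ~~ occ x k.+1 then
       (if j == k :> nat then false else if j == k.+1 then true else x i)
     else x i].

Definition jump_list (n : nat) (d : measure_display) (Omega : measurableType d)
    (pts : 'I_n.+1 -> Omega -> set R) (t0 t : R) (w : Omega)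
    (s : seq (R * 'I_n.+1)) : Prop :=
  sorted (fun p q : R * 'I_n.+1 => p.1 < q.1) s /\
  forall (u : R) (k : 'I_n.+1), (pts k w u /\ t0 <= u < t) <-> (u, k) \in s.

Definition nrds (n : nat) (d : measure_display) (Omega : measurableType d)
    (pts : 'I_n.+1 -> Omega -> set R) (t t0 : R) (x : state n) (w : Omega)
    (y : state n) : Prop :=
  exists s, jump_list pts t0 t w s /\ foldl (@jump n) x (map snd s) = y.

(** Gamma(t,t0): phi(t,t0,.,w) is a constant map on X
    (phi is defined whenever the jumps in [t0,t) are finite and distinct,
    which holds almost surely). *)
Definition Gamma (n : nat) (d : measure_display) (Omega : measurableType d)
    (pts : 'I_n.+1 -> Omega -> set R) (t t0 : R) : set Omega :=
  [set w | exists s, jump_list pts t0 t w s /\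
     forall x1 x2 : state n,
       foldl (@jump n) x1 (map snd s) = foldl (@jump n) x2 (map snd s)].

End TASEP.

(* Main.v *)
Require Import Defs.
From HB Require Import structures.
From mathcomp Require Import all_boot all_order all_algebra.
From mathcomp Require Import all_classical all_reals all_analysis.
From mathcomp Require Import zify.
Import Order.TTheory GRing.Theory Num.Theory.
Local Open Scope classical_set_scope.
Local Open Scope ring_scope.
Set Implicit Arguments. Unset Strict Implicit.

Lemma occE (n : nat) (x : state n) (i : 'I_n) : occ x i.+1 = x i.
Proof.
apply/existsP/idP.
- by case=> j /andP[/eqP/succn_inj/val_inj -> ].
- by move=> h; exists i; rewrite eqxx h.
Qed.

Lemma occ_big (n : nat) (x : state n) (s : nat) : (n < s)%N -> occ x s = false.
Proof.
move=> hs; apply/existsP => -[j /andP[/eqP hj _]].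
have := ltn_ord j; lia.
Qed.

Definition inv_ok (n : nat) (x : state n) (lo k : nat) :=
  forall i : 'I_n, (lo <= i.+1)%N -> i.+1 <> k -> x i = false.

Lemma J1 (n : nat) (x : state n) (lo k : nat) :
  (1 <= lo)%N -> (lo <= k)%N -> (k < n)%N -> inv_ok x lo k ->
  inv_ok (jump x (inord k)) lo k.+1.
Proof.
move=> h1 h2 h3 hx i hi hik.
have hk : (inord k : 'I_n.+1) = k :> nat by rewrite inordK //; lia.
have ok1 : occ x k.+1 = false.
  have hk1 : (k < n)%N by [].
  have := occE x (Ordinal hk1); move=> /= ->; apply: hx => /=; lia.
rewrite ffunE hk.
have -> : (k == 0%N) = false by apply/eqP; lia.
have -> : (k == n) = false by apply/eqP; lia.
rewrite ok1 andbT /=.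
case hok: (occ x k).
- case: (eqVneq i.+1 k) => // hik'.
  have -> : (i.+1 == k.+1) = false by apply/eqP.
  by apply: hx => //; apply/eqP.
- case: (eqVneq i.+1 k) => e.
  + by rewrite -occE e.
  + by apply: hx => //; apply/eqP.
Qed.

Lemma J2 (n : nat) (x : state n) (lo : nat) :
  (1 <= lo)%N -> inv_ok x lo n ->
  forall i : 'I_n, (lo <= i.+1)%N -> jump x (inord n) i = false.
Proof.
move=> h1 hx i hi.
have hn : (inord n : 'I_n.+1) = n :> nat by rewrite inordK.
rewrite ffunE hn /=.
have -> : (n == 0%N) = false by apply/eqP; have := ltn_ord i; lia.
rewrite eqxx.
case: (eqVneq i.+1 n) => // e.
by apply: hx => //; apply/eqP.
Qed.

Definition block (n j : nat) : seq 'I_n.+1 := map (@inord n) (iota (n - j).+1 j).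

Lemma block_ok (n : nat) (lo : nat) : (1 <= lo)%N ->
  forall c k (x : state n), (lo <= k)%N -> (k + c = n)%N -> inv_ok x lo k ->
  forall i : 'I_n, (lo <= i.+1)%N ->
    foldl (@jump n) x (map (@inord n) (iota k c.+1)) i = false.
Proof.
move=> h1; elim=> [|c IH] k x hk hkc hx i hi.
- rewrite addn0 in hkc; subst k => /=.
  exact: (J2 h1 hx hi).
- rewrite /= -/(iota k.+1 c.+1).
  apply: IH => //; try lia.
  by apply: J1 => //; lia.
Qed.

Fixpoint Wpre (n J : nat) : seq 'I_n.+1 :=
  match J with 0%N => [::] | J'.+1 => Wpre n J' ++ block n J'.+1 end.

Lemma size_Wpre n J : size (Wpre n J) = (J * J.+1 %/ 2)%N.
Proof.
elim: J => [//|J IH] /=.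
rewrite size_cat IH /block size_map size_iota. lia.
Qed.

Lemma Wpre_ok (n : nat) (J : nat) : (J <= n)%N -> forall (x : state n),
  forall i : 'I_n, (n - J < i.+1)%N -> foldl (@jump n) x (Wpre n J) i = false.
Proof.
elim: J => [|J IH] hJ x i hi.
- have := ltn_ord i; lia.
- rewrite /= foldl_cat /block.
  apply: (@block_ok n (n - J.+1).+1) => //; try lia.
  move=> j hj hne; apply: IH; lia.
Qed.

Lemma W_sync (n : nat) (x1 x2 : state n) :
  foldl (@jump n) x1 (Wpre n n) = foldl (@jump n) x2 (Wpre n n).
Proof.
apply/ffunP => i.
rewrite !Wpre_ok //; lia.
Qed.

Lemma find_int (R : realType) (q : nat -> R) (M : nat) (v : R) :
  q 0%N <= v -> v < q M -> exists2 j, (j < M)%N & q j <= v < q j.+1.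
Proof.
move=> h0; elim: M => [|M IH] hM.
- by have := lt_le_trans hM h0; rewrite ltxx.
- case: (ltP v (q M)) => hv.
  + by have [j hj hj'] := IH hv; exists j => //; lia.
  + by exists M => //; rewrite hv hM.
Qed.

Theorem lemma12 (R : realType) (r Rb : R) (n : nat) :
  0 < r -> r < Rb ->
  exists2 delta : R, 0 < delta &
    forall (lam : 'I_n.+1 -> R -> R)
           (d : measure_display) (Omega : measurableType d)
           (P : probability Omega R) (pts : 'I_n.+1 -> Omega -> set R)
           (t0 t : R),
      (forall k, admissible_rate (lam k)) ->
      indep_poisson_processes lam P pts ->
      joint_bounded lam r Rb (n * n.+1 %/ 2) t0 t ->
      exists2 A : set Omega, measurable A /\ A `<=` Gamma pts t t0 &
        (delta%:E <= P A)%E.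
Proof.
move=> hr hrR.
set m := (n * n.+1 %/ 2)%N.
set c := expR (- Rb) * Num.min 1 r.
have c0 : 0 < c by rewrite mulr_gt0 ?expR_gt0 // lt_min ltr01 hr.
exists (c ^+ (m * n.+1)); first exact: exprn_gt0.
move=> lam d Omega P pts t0 t _ hind [q [q0 qm qinc qb]].
have qmono : forall a b, (a <= b)%N -> (b <= m)%N -> q a <= q b.
  move=> a b; elim: b => [|b IH] hab hbm.
  - by move: hab; rewrite leqn0 => /eqP ->.
  - rewrite leq_eqVlt in hab; case/orP: hab => [/eqP -> //| hab].
    apply: le_trans (IH _ _) (ltW (qinc _ _)); lia.
set W := Wpre n n.
have sW : size W = m by rewrite size_Wpre.
pose F := mkseq (fun p => (@inord n ((p %% n.+1)%N), q ((p %/ n.+1)%N), q ((p %/ n.+1)%N).+1)) (m * n.+1).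
pose cnt := mkseq (fun p => if @inord n ((p %% n.+1)%N) == nth ord0 W ((p %/ n.+1)%N) then 1%N else 0%N) (m * n.+1).
have sF : size F = (m * n.+1)%N by rewrite size_mkseq.
have hdiv : forall p, (p < m * n.+1)%N -> ((p %/ n.+1)%N < m)%N by move=> p hp; rewrite ltn_divLR.
have nthF : forall p, (p < m * n.+1)%N -> nth (ord0, 0, 0) F p =
   (@inord n ((p %% n.+1)%N), q ((p %/ n.+1)%N), q ((p %/ n.+1)%N).+1) by move=> p hp; rewrite nth_mkseq.
have [||| mE PE] := hind F cnt.
- by rewrite !size_mkseq.
- move=> i; rewrite sF => hi; rewrite nthF //=; apply: ltW; apply: qinc; exact: hdiv.
- move=> i j; rewrite sF => hi hj hij; rewrite !nthF //= => hk.
  have hmod : (i %% n.+1)%N = (j %% n.+1)%N.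
    by move/(congr1 (@nat_of_ord _)): hk; rewrite !inordK // ltn_mod.
  have hdv : (i %/ n.+1)%N <> (j %/ n.+1)%N.
    by move=> e; apply: hij; rewrite (divn_eq i n.+1) (divn_eq j n.+1) e hmod.
  rewrite -subset0 => x [] /=; rewrite !in_itv /= => /andP[a1 a2] /andP[b1 b2].
  case: (ltngtP ((i %/ n.+1)%N) ((j %/ n.+1)%N)) => hl.
  + have := qmono _ _ hl (ltnW (hdiv j hj)).
    by move=> h; have := lt_le_trans a2 (le_trans h b1); rewrite ltxx.
  + have := qmono _ _ hl (ltnW (hdiv i hi)).
    by move=> h; have := lt_le_trans b2 (le_trans h a1); rewrite ltxx.
  + by [].
eexists; first split; first exact: mE.
- move=> w /= hw.
  have hc : forall j (k : 'I_n.+1), (j < m)%N ->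
      card_is (pts k w `&` `[q j, q j.+1[) (if k == nth ord0 W j then 1%N else 0%N).
    move=> j k hj.
    have hp : (j * n.+1 + k < m * n.+1)%N by have := ltn_ord k; nia.
    have := hw _ (eq_ind_r (fun z => (_ < z)%N) hp sF).
    rewrite nthF // nth_mkseq //=.
    have e1 : ((j * n.+1 + k) %% n.+1)%N = k by rewrite modnMDl modn_small.
    have e2 : ((j * n.+1 + k) %/ n.+1)%N = j by rewrite divnMDl // divn_small ?addn0.
    by rewrite e1 e2 inord_val.
  have hu : forall j, exists u : R, (j < m)%N ->
      pts (nth ord0 W j) w u /\ q j <= u < q j.+1.
    move=> j; case: (ltnP j m) => hj; last by exists 0.
    have [s [us ss hs]] := hc j (nth ord0 W j) hj.
    rewrite eqxx in ss.
    case: s us ss hs => [|u [|]] //= _ _ hs.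
    exists u => _.
    have := proj2 (hs u); rewrite inE eqxx => /(_ isT) [h1 h2].
    by rewrite in_itv /= in h2.
  have [u hu'] := choice hu.
  exists [seq (u j, nth ord0 W j) | j <- iota 0 m].
  split; [split|].
  + rewrite sorted_map.
    apply: (@sub_in_sorted _ (mem (iota 0 m)) ltn); last exact: iota_ltn_sorted.
    * move=> a b ha hb hab; move: ha hb; rewrite !mem_iota /= !add0n => ha hb.
      have [_ /andP[_ a2]] := hu' a ha.
      have [_ /andP[b1 _]] := hu' b hb.
      exact: lt_le_trans a2 (le_trans (qmono _ _ hab (ltnW hb)) b1).
    * by apply/allP.
  + move=> v k; split.
    * move=> [hv /andP[v1 v2]].
      rewrite -q0 in v1; rewrite -qm in v2.
      have [j hj hjv] := find_int v1 v2.
      have [s [us ss hs]] := hc j k hj.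
      have hvs : v \in s by apply/hs; split => //; rewrite in_itv /= hjv.
      case: eqP ss => [ek|nek] ss.
      - case: s us ss hs hvs => [|x [|]] //= _ _ hs.
        rewrite inE => /eqP ev.
        have [h1 h2] := hu' j hj.
        have : u j \in [:: x] by apply/hs; split; [rewrite ek|rewrite in_itv].
        rewrite inE => /eqP euj.
        apply/mapP; exists j; first by rewrite mem_iota.
        by rewrite ek ev euj.
      - by case: s us ss hs hvs.
    * case/mapP => j; rewrite mem_iota add0n => /andP[_ hj] [-> ->].
      have [h1 /andP[h2 h3]] := hu' j hj.
      split => //; apply/andP; split.
      - by rewrite -q0; apply: le_trans (qmono 0%N j _ _) h2 => //; lia.
      - by apply: lt_le_trans h3 _; rewrite -qm; apply: qmono => //; lia.
  + move=> x1 x2.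
    have -> : map snd [seq (u j, nth ord0 W j) | j <- iota 0 m] = W.
      by rewrite -map_comp /= -sW; exact: mkseq_nth.
    exact: W_sync.
- rewrite PE lee_fin.
  have -> : c ^+ (m * n.+1) = \prod_(i < size F) c by rewrite prodr_const card_ord sF.
  apply: ler_prod => -[i hi] _ /=.
  rewrite (ltW c0) /=.
  have hi' : (i < m * n.+1)%N by rewrite -sF.
  rewrite nthF // nth_mkseq //=.
  set k := inord _; set j := ((i %/ n.+1)%N)%N.
  have /andP[hlo hhi] := qb j k (hdiv i hi').
  set mu := rate_int _ _ _ in hlo hhi *.
  have hmu : expR (- Rb) <= expR (- mu) by rewrite ler_expR lerN2.
  have hm1 : Num.min 1 r <= 1 by rewrite ge_min lexx.
  have hmr : Num.min 1 r <= mu by rewrite ge_min hlo orbT.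
  case: ifP => _; rewrite /poisson_mass.
  + rewrite expr1 (_ : (1`!)%:R = 1 :> R) ?divr1 //.
    apply: ler_pM; [exact: expR_ge0 | by rewrite le_min ler01 (ltW hr) | exact: hmu | exact: hmr].
  + rewrite expr0 (_ : (0`!)%:R = 1 :> R) ?divr1 ?mulr1 //.
    apply: le_trans hmu.
    by rewrite /c ler_piMr ?expR_ge0.
Qed.
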